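(* There is a unique function $\phi\colon\mathrm{SL}_2(\mathbb{Z})\times\mathrm{SL}_2(\mathbb{Z})\to\frac{1}{12}\mathbb{Z}$ which is left $\mathrm{SL}_2(\mathbb{Z})$-invariant ($\phi(h\gamma_1,h\gamma_2)=\phi(\gamma_1,\gamma_2)$) and satisfies $$\phi(\gamma_1,\gamma_2)+\phi(\gamma_2,\gamma_3)-\phi(\gamma_1,\gamma_3)=\delta(\gamma_1\ell_0,\gamma_2\ell_0,\gamma_3\ell_0)$$ for all $\gamma_1,\gamma_2,\gamma_3\in\mathrm{SL}_2(\mathbb{Z})$.
   Context: $S^1=(\mathbb{R}^2\setminus\{0\})/\mathbb{R}_+$ is the circle of rays in $\mathbb{R}^2$ (row vectors) with the standard orientation. $\ell_0$ is the ray $\mathbb{R}_+(-1,0)$, and $\gamma\in\mathrm{SL}_2(\mathbb{Z})$ acts on rays by $\mathbb{R}_+\nu\mapsto\mathbb{R}_+\nu\gamma^{-1}$. For rays $\ell_1,\ell_2,\ell_3$, $\delta(\ell_1,\ell_2,\ell_3)=0$ if $\ell_2$ lies on the closed counterclockwise arc from $\ell_1$ to $\ell_3$ (endpoints included), and $\delta(\ell_1,\ell_2,\ell_3)=1$ otherwise. *)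

(* Defs.v *)
From mathcomp Require Import all_boot all_order all_algebra.
Set Implicit Arguments. Unset Strict Implicit. Unset Printing Implicit Defensive.
Import Order.TTheory GRing.Theory Num.Theory.
Local Open Scope ring_scope.

(* Rays are represented by nonzero integer row vectors (all rays occurring here,
   gamma l0 with gamma in SL2(Z), have integer representatives).  Everything
   below is invariant under positive rescaling, so it is a function of rays. *)

Definition cross (u v : 'rV[int]_2) : int := u 0 0 * v 0 1 - u 0 1 * v 0 0.
Definition dotp (u v : 'rV[int]_2) : int := u 0 0 * v 0 0 + u 0 1 * v 0 1.

(* Position of the ray of x on the circle measured counterclockwise from the
   ray of u: 0 = angle 0, 1 = angle in (0,pi), 2 = angle pi, 3 = angle in (pi,2pi). *)
Definition sector (u x : 'rV[int]_2) : nat :=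
  if cross u x > 0 then 1%N
  else if cross u x < 0 then 3%N
  else if dotp u x > 0 then 0%N else 2%N.

(* ray(v) lies on the closed counterclockwise arc from ray(u) to ray(w)
   (i.e. the ccw angle from u to v is <= the ccw angle from u to w, angles
   taken in [0, 2pi)); for u = w the arc is the single ray {u}. *)
Definition on_ccw_arc (u v w : 'rV[int]_2) : bool :=
  (sector u v < sector u w)%N || ((sector u v == sector u w) && (cross v w >= 0)).

Definition delta (u v w : 'rV[int]_2) : int :=
  if on_ccw_arc u v w then 0 else 1.

Definition l0 : 'rV[int]_2 := \row_(j < 2) (if j == 0 then -1 else 0).

(* action of gamma on rays: R_+ nu |-> R_+ nu gamma^{-1} *)
Definition act (g : 'M[int]_2) (nu : 'rV[int]_2) : 'rV[int]_2 := nu *m invmx g.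

Definition SL2Z (g : 'M[int]_2) : Prop := \det g = 1.

Definition in_twelfth_Z (q : rat) : Prop := exists z : int, q = z%:~R / 12%:R.

Definition phi_spec (phi : 'M[int]_2 -> 'M[int]_2 -> rat) : Prop :=
  (forall g1 g2, SL2Z g1 -> SL2Z g2 -> in_twelfth_Z (phi g1 g2)) /\
  (forall h g1 g2, SL2Z h -> SL2Z g1 -> SL2Z g2 ->
     phi (h *m g1) (h *m g2) = phi g1 g2) /\
  (forall g1 g2 g3, SL2Z g1 -> SL2Z g2 -> SL2Z g3 ->
     phi g1 g2 + phi g2 g3 - phi g1 g3
       = (delta (act g1 l0) (act g2 l0) (act g3 l0))%:~R).

(* Main.v *)
Require Import Defs.
From mathcomp Require Import all_boot all_order all_algebra.
From mathcomp Require Import zify ring lra.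
Import Order.TTheory GRing.Theory Num.Theory.
Set Implicit Arguments. Unset Strict Implicit. Unset Printing Implicit Defensive.
Local Open Scope ring_scope.


Definition vec := (int * int)%type.
Definition crs (u v : vec) : int := u.1 * v.2 - u.2 * v.1.
Definition dt (u v : vec) : int := u.1 * v.1 + u.2 * v.2.
Definition sec (u x : vec) : nat :=
  if crs u x > 0 then 1%N
  else if crs u x < 0 then 3%N
  else if dt u x > 0 then 0%N else 2%N.
Definition arc (u v w : vec) : bool :=
  (sec u v < sec u w)%N || ((sec u v == sec u w) && (crs v w >= 0)).
Definition dl (u v w : vec) : int := if arc u v w then 0 else 1.
Definition L0 : vec := (-1, 0).
Definition AA (x y : vec) : int := if arc L0 x y then 0 else 1.
Definition nz (v : vec) : Prop := v.1 <> 0 \/ v.2 <> 0.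

Lemma sec_cases u x :
  (sec u x = 0%N /\ crs u x = 0 /\ 0 < dt u x) \/
  (sec u x = 1%N /\ 0 < crs u x) \/
  (sec u x = 2%N /\ crs u x = 0 /\ dt u x <= 0) \/
  (sec u x = 3%N /\ crs u x < 0).
Proof.
rewrite /sec; case: ifP => h1; first by right; left.
case: ifP => h2; first by right; right; right.
case: ifP => h3; first by left; split => //; split => //; lia.
right; right; left; split => //; split; lia.
Qed.

Lemma sec_cases' u1 u2 x1 x2 :
  (sec (u1,u2) (x1,x2) = 0%N /\ u1 * x2 - u2 * x1 = 0 /\ 0 < u1 * x1 + u2 * x2) \/
  (sec (u1,u2) (x1,x2) = 1%N /\ 0 < u1 * x2 - u2 * x1) \/
  (sec (u1,u2) (x1,x2) = 2%N /\ u1 * x2 - u2 * x1 = 0 /\ u1 * x1 + u2 * x2 <= 0) \/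
  (sec (u1,u2) (x1,x2) = 3%N /\ u1 * x2 - u2 * x1 < 0).
Proof. exact: sec_cases. Qed.

Ltac secs u1 u2 x1 x2 := let H1 := fresh "h" in let H2 := fresh "h" in
  destruct (sec_cases' u1 u2 x1 x2) as [[-> [H1 H2]]|[[-> H1]|[[-> [H1 H2]]|[-> H1]]]].

Record m4 := M4 { e00 : int; e01 : int; e10 : int; e11 : int }.
Definition det4 (g : m4) : int := e00 g * e11 g - e01 g * e10 g.
Definition vm (v : vec) (g : m4) : vec :=
  (v.1 * e00 g + v.2 * e10 g, v.1 * e01 g + v.2 * e11 g).

Lemma crs_vm u v g : crs (vm u g) (vm v g) = det4 g * crs u v.
Proof. case: u v g => [u1 u2] [v1 v2] [a b c d]; rewrite /crs /det4 /=; ring. Qed.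

Lemma sqpos (x : int) : x != 0 -> 0 < x * x.
Proof. by case: (ltrgtP x 0) => // h _; nia. Qed.

Lemma possame (P Q a b : int) : 0 < P -> 0 < Q -> P * a = b * Q -> (0 < a) = (0 < b).
Proof. by move=> hP hQ e; apply/idP/idP => h; nia. Qed.

Lemma dt_vm u v g : 0 < det4 g -> crs u v = 0 ->
  (0 < dt (vm u g) (vm v g)) = (0 < dt u v).
Proof.
case: u v g => [u1 u2] [v1 v2] [a b c d]; rewrite /crs /dt /det4 /vm /= => hd hc.
have [u0|unz] := boolP ((u1 == 0) && (u2 == 0)).
  by case/andP: u0 => /eqP -> /eqP ->; rewrite !mul0r !add0r.
have hu : 0 < u1 * u1 + u2 * u2.
  by case/nandP: unz => /sqpos h; nia.
have hg : 0 < (u1 * a + u2 * c) * (u1 * a + u2 * c) + (u1 * b + u2 * d) * (u1 * b + u2 * d).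
  have [hXY|hXY] := boolP (((u1 * a + u2 * c) == 0) && ((u1 * b + u2 * d) == 0)).
    case/andP: hXY => /eqP hX /eqP hY; exfalso.
    have h1 : u1 * (a * d - b * c) = d * (u1 * a + u2 * c) - c * (u1 * b + u2 * d) by ring.
    have h2 : u2 * (a * d - b * c) = a * (u1 * b + u2 * d) - b * (u1 * a + u2 * c) by ring.
    rewrite hX hY in h1 h2.
    rewrite !mulr0 subr0 in h1 h2.
    case/nandP: unz => h.
      by case: (ltrgtP u1 0) h => // hu1 _; nia.
    by case: (ltrgtP u2 0) h => // hu1 _; nia.
  have s1 : 0 <= (u1 * a + u2 * c) * (u1 * a + u2 * c) by rewrite -expr2 sqr_ge0.
  have s2 : 0 <= (u1 * b + u2 * d) * (u1 * b + u2 * d) by rewrite -expr2 sqr_ge0.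
  case/nandP: hXY => /sqpos h; lia.
have id : (u1 * u1 + u2 * u2) * ((u1 * a + u2 * c) * (v1 * a + v2 * c) + (u1 * b + u2 * d) * (v1 * b + v2 * d))
   = (u1 * v1 + u2 * v2) * ((u1 * a + u2 * c) * (u1 * a + u2 * c) + (u1 * b + u2 * d) * (u1 * b + u2 * d))
   + (u1 * v2 - u2 * v1) * ((u1 * a + u2 * c) * (- u2 * a + u1 * c) + (u1 * b + u2 * d) * (- u2 * b + u1 * d)).
  ring.
rewrite hc mul0r addr0 in id.
exact: (possame hu hg id).
Qed.

Lemma sec_vm u x g : 0 < det4 g -> sec (vm u g) (vm x g) = sec u x.
Proof.
move=> hd; rewrite /sec crs_vm.
have [hc|hc|hc] := ltrgtP (crs u x) 0.
- have -> : (0 < det4 g * crs u x) = false by apply/negbTE; nia.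
  by have -> : (det4 g * crs u x < 0) by nia.
- by have -> : (0 < det4 g * crs u x) by nia.
- by rewrite hc mulr0 ltxx dt_vm.
Qed.

Lemma arc_vm u v w g : 0 < det4 g -> arc (vm u g) (vm v g) (vm w g) = arc u v w.
Proof.
move=> hd; rewrite /arc !sec_vm // crs_vm.
by have -> : (0 <= det4 g * crs v w) = (0 <= crs v w) by apply/idP/idP => h; nia.
Qed.

Lemma dl_vm u v w g : 0 < det4 g -> dl (vm u g) (vm v g) (vm w g) = dl u v w.
Proof. by move=> hd; rewrite /dl arc_vm. Qed.

Definition sc (t : int) (v : vec) : vec := (t * v.1, t * v.2).
Lemma crs_scl t u v : crs (sc t u) v = t * crs u v.
Proof. rewrite /crs /sc /=; ring. Qed.
Lemma crs_scr t u v : crs u (sc t v) = t * crs u v.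
Proof. rewrite /crs /sc /=; ring. Qed.
Lemma dt_scl t u v : dt (sc t u) v = t * dt u v.
Proof. rewrite /dt /sc /=; ring. Qed.
Lemma dt_scr t u v : dt u (sc t v) = t * dt u v.
Proof. rewrite /dt /sc /=; ring. Qed.
Lemma pos_mul (t x : int) : 0 < t -> (0 < t * x) = (0 < x).
Proof. by move=> ht; apply/idP/idP => h; nia. Qed.
Lemma neg_mul (t x : int) : 0 < t -> (t * x < 0) = (x < 0).
Proof. by move=> ht; apply/idP/idP => h; nia. Qed.
Lemma nneg_mul (t x : int) : 0 < t -> (0 <= t * x) = (0 <= x).
Proof. by move=> ht; apply/idP/idP => h; nia. Qed.

Lemma sec_scl t u x : 0 < t -> sec (sc t u) x = sec u x.
Proof. by move=> ht; rewrite /sec crs_scl dt_scl !pos_mul // neg_mul. Qed.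
Lemma sec_scr t u x : 0 < t -> sec u (sc t x) = sec u x.
Proof. by move=> ht; rewrite /sec crs_scr dt_scr !pos_mul // neg_mul. Qed.
Lemma arc_sc1 t u v w : 0 < t -> arc (sc t u) v w = arc u v w.
Proof. by move=> ht; rewrite /arc !sec_scl. Qed.
Lemma arc_sc2 t u v w : 0 < t -> arc u (sc t v) w = arc u v w.
Proof. by move=> ht; rewrite /arc !sec_scr // crs_scl nneg_mul. Qed.
Lemma arc_sc3 t u v w : 0 < t -> arc u v (sc t w) = arc u v w.
Proof. by move=> ht; rewrite /arc !sec_scr // crs_scr nneg_mul. Qed.

Definition rot (v : vec) : vec := (- v.2, v.1).
Definition psi (v : vec) : int := if (0 < v.2) && (v.1 <= 0) then 1 else 0.

Lemma rotA (v1 v2 w1 w2 : int) : (v1 <> 0 \/ v2 <> 0) -> (w1 <> 0 \/ w2 <> 0) ->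
  AA (rot (v1,v2)) (rot (w1,w2)) = AA (v1,v2) (w1,w2) - psi (v1,v2) + psi (w1,w2).
Proof.
move=> hv hw.
rewrite /AA /arc /L0 /rot /psi /=.
have [l1 [l2 [-> [e1 e2]]]] : exists l1 l2 : int, (-1, 0) = (l1, l2) /\ l1 = -1 /\ l2 = 0 by exists (-1), 0.
have -> : crs (- v2, v1) (- w2, w1) = crs (v1,v2) (w1,w2) by rewrite /crs /=; ring.
secs l1 l2 v1 v2; secs l1 l2 w1 w2; secs l1 l2 (-v2) v1; secs l1 l2 (-w2) w1;
rewrite /= /crs /=; subst l1 l2;
  repeat case: ifP => ?; try lia; try nia.
Qed.


Ltac genL0 := let l1 := fresh "l" in let l2 := fresh "l" in let e1 := fresh "e" in let e2 := fresh "e" in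
  have [l1 [l2 [-> [e1 e2]]]] : exists l1 l2 : int, L0 = (l1, l2) /\ l1 = -1 /\ l2 = 0 by exists (-1), 0.

Definition nzv (v : vec) : Prop := v.1 <> 0 \/ v.2 <> 0.
Definition PK (x : vec) : Prop := forall y z, nzv y -> nzv z ->
  dl x y z = AA x y + AA y z - AA x z.

Lemma nz_vm u g : nzv u -> 0 < det4 g -> nzv (vm u g).
Proof.
case: u g => [u1 u2] [a b c d]; rewrite /nzv /vm /det4 /= => hu hd.
have h1 : u1 * (a * d - b * c) = d * (u1 * a + u2 * c) - c * (u1 * b + u2 * d) by ring.
have h2 : u2 * (a * d - b * c) = a * (u1 * b + u2 * d) - b * (u1 * a + u2 * c) by ring.
case: (boolP ((u1 * a + u2 * c) == 0)) => [/eqP hX|/eqP hX]; last by left.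
case: (boolP ((u1 * b + u2 * d) == 0)) => [/eqP hY|/eqP hY]; last by right.
exfalso; rewrite hX hY !mulr0 subr0 in h1 h2.
case: hu => h.
  by case: (ltrgtP u1 0) h => // hu1 _; nia.
by case: (ltrgtP u2 0) h => // hu1 _; nia.
Qed.

Lemma PK_L0 : PK L0.
Proof.
move=> [y1 y2] [z1 z2] hy hz; rewrite /dl /AA.
have L0L0 : forall v1 v2, arc L0 L0 (v1, v2).
  move=> v1 v2; rewrite /arc; genL0; secs l l0 l l0; secs l l0 v1 v2; subst; rewrite /= ?eqxx ?orbT //; rewrite /crs /= in h1 *; lia.
rewrite !L0L0.
by rewrite add0r subr0.
Qed.

Definition Rm := M4 0 1 (-1) 0.
Lemma rot_vm v : rot v = vm v Rm.
Proof. case: v => v1 v2; rewrite /rot /vm /=; congr (_,_); ring. Qed.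

Lemma nz_rot v : nzv v -> nzv (rot v).
Proof. case: v => v1 v2; rewrite /nzv /rot /=; case=> h; [right|left] => //; lia. Qed.

Lemma PK_rot x : nzv x -> PK (rot x) -> PK x.
Proof.
move=> hx H [y1 y2] [z1 z2] hy hz.
have := H (rot (y1,y2)) (rot (z1,z2)) (nz_rot hy) (nz_rot hz).
case: x H hx => x1 x2 H hx.
rewrite !rotA //.
rewrite !rot_vm dl_vm; last by [].
move=> ->; ring.
Qed.

Lemma AA_vm u v g t : 0 < det4 g -> 0 < t -> vm L0 g = sc t L0 ->
  AA (vm u g) (vm v g) = AA u v.
Proof.
by move=> hd ht e; rewrite /AA -(arc_sc1 _ _ _ ht) -e arc_vm.
Qed.

Lemma PK_vm x g t : 0 < det4 g -> 0 < t -> vm L0 g = sc t L0 -> PK (vm x g) -> PK x.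
Proof.
move=> hd ht e H y z hy hz.
have := H (vm y g) (vm z g) (nz_vm hy hd) (nz_vm hz hd).
by rewrite dl_vm // !(AA_vm _ _ hd ht e).
Qed.

Lemma AA_sc t u v : 0 < t -> AA (sc t u) v = AA u v.
Proof. by move=> ht; rewrite /AA arc_sc2. Qed.

Lemma PK_sc x t : 0 < t -> PK x -> PK (sc t x).
Proof.
move=> ht H y z hy hz.
by rewrite /dl arc_sc1 // !AA_sc // -/(dl x y z) H.
Qed.

Lemma PK_all x : nzv x -> PK x.
Proof.
have P01 : PK (0, 1).
  apply: PK_rot; first by right.
  by rewrite /rot /=; exact: PK_L0.
have P10 : PK (1, 0).
  apply: PK_rot; first by left.
  by rewrite /rot /=.
have P0m : PK (0, -1).
  apply: PK_rot; first by right.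
  by rewrite /rot /= opprK.
case: x => x1 x2 hx.
case: (boolP (x2 == 0)) => [/eqP e2|/eqP n2].
  subst x2; case: hx => //= h1.
  case: (ltrgtP x1 0) h1 => // h1 _.
    have -> : (x1, 0) = sc (- x1) L0 by rewrite /sc /L0 /=; congr (_,_); ring.
    by apply: PK_sc; [lia | exact: PK_L0].
  have -> : (x1, 0) = sc x1 (1,0) by rewrite /sc /=; congr (_,_); ring.
  by apply: PK_sc.
pose g := M4 (x2 * x2) 0 (- x1 * x2) 1.
have hd : 0 < det4 g by rewrite /det4 /=; case: (ltrgtP x2 0) n2 => // h _; nia.
apply: (@PK_vm _ g (x2 * x2)) => //.
- by case: (ltrgtP x2 0) n2 => // h _; nia.
- by rewrite /vm /sc /L0 /=; congr (_,_); ring.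
have -> : vm (x1, x2) g = (0, x2) by rewrite /vm /=; congr (_,_); ring.
case: (ltrgtP x2 0) n2 => // h _.
  have -> : (0, x2) = sc (- x2) (0, -1) by rewrite /sc /=; congr (_,_); ring.
  by apply: PK_sc; [lia | ].
have -> : (0, x2) = sc x2 (0, 1) by rewrite /sc /=; congr (_,_); ring.
by apply: PK_sc.
Qed.

Lemma KEY x y z : nzv x -> nzv y -> nzv z -> dl x y z = AA x y + AA y z - AA x z.
Proof. by move=> hx; apply: PK_all. Qed.


Definition mul (x y : m4) : m4 :=
  M4 (e00 x * e00 y + e01 x * e10 y) (e00 x * e01 y + e01 x * e11 y)
     (e10 x * e00 y + e11 x * e10 y) (e10 x * e01 y + e11 x * e11 y).
Definition I4 := M4 1 0 0 1.
Definition adj (x : m4) : m4 := M4 (e11 x) (- e01 x) (- e10 x) (e00 x).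
Definition ray (g : m4) : vec := vm L0 (adj g).
Definition cc (a b : m4) : int := dl L0 (ray a) (ray (mul a b)).

Ltac m4eq := match goal with |- M4 _ _ _ _ = M4 _ _ _ _ => congr M4; ring end.

Lemma mulA x y z : mul x (mul y z) = mul (mul x y) z.
Proof. case: x y z => [? ? ? ?] [? ? ? ?] [? ? ? ?]; rewrite /mul /=; m4eq. Qed.
Lemma mulx1 x : mul x I4 = x.
Proof. case: x => ? ? ? ?; rewrite /mul /=; m4eq. Qed.
Lemma mul1x x : mul I4 x = x.
Proof. case: x => ? ? ? ?; rewrite /mul /=; m4eq. Qed.
Lemma detM x y : det4 (mul x y) = det4 x * det4 y.
Proof. case: x y => [? ? ? ?] [? ? ? ?]; rewrite /det4 /mul /=; ring. Qed.
Lemma adjM x y : adj (mul x y) = mul (adj y) (adj x).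
Proof. case: x y => [? ? ? ?] [? ? ? ?]; rewrite /adj /mul /=; m4eq. Qed.
Lemma det_adj x : det4 (adj x) = det4 x.
Proof. case: x => ? ? ? ?; rewrite /det4 /adj /=; ring. Qed.
Lemma adjK x : adj (adj x) = x.
Proof. case: x => ? ? ? ?; rewrite /adj /=; m4eq. Qed.
Lemma mul_adj x : det4 x = 1 -> mul (adj x) x = I4.
Proof. case: x => a b c d; rewrite /det4 /adj /mul /I4 /= => h; congr M4; lia. Qed.
Lemma mul_adj' x : det4 x = 1 -> mul x (adj x) = I4.
Proof. case: x => a b c d; rewrite /det4 /adj /mul /I4 /= => h; congr M4; lia. Qed.
Lemma vm_mul v a b : vm (vm v a) b = vm v (mul a b).
Proof. case: v a b => [? ?] [? ? ? ?] [? ? ? ?]; rewrite /vm /mul /=; congr (_,_); ring. Qed.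

Lemma ray_mul a b : ray (mul a b) = vm (ray b) (adj a).
Proof. by rewrite /ray adjM vm_mul. Qed.

Lemma nz_ray g : det4 g = 1 -> nzv (ray g).
Proof.
case: g => a b c d; rewrite /det4 /ray /vm /adj /nzv /L0 /= => h.
case: (boolP (d == 0)) => [/eqP hd|/eqP hd]; last by left; lia.
right; subst d; lia.
Qed.

Lemma nzL0 : nzv L0.
Proof. by left. Qed.

Lemma cc_cocycle a b x : det4 a = 1 -> det4 b = 1 -> det4 x = 1 ->
  cc a b + cc (mul a b) x = cc b x + cc a (mul b x).
Proof.
move=> ha hb hx.
have hab : det4 (mul a b) = 1 by rewrite detM ha hb mulr1.
have hbx : det4 (mul b x) = 1 by rewrite detM hb hx mulr1.
have habx : det4 (mul (mul a b) x) = 1 by rewrite detM hab hx mulr1.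
have e : cc b x = dl (ray a) (ray (mul a b)) (ray (mul (mul a b) x)).
  rewrite /cc -(@dl_vm _ _ _ (adj a)); last by rewrite det_adj ha.
  by rewrite -!ray_mul -/(ray a) mulA.
rewrite e /cc -mulA.
rewrite !KEY; try exact: nzL0; try (apply: nz_ray; rewrite ?detM; lia).
rewrite mulA; ring.
Qed.

Inductive letter := LS | LB.
Definition Sm := M4 0 (-1) 1 0.
Definition Bm := M4 0 (-1) 1 1.
Definition mat (l : letter) : m4 := match l with LS => Sm | LB => Bm end.
Definition kap (l : letter) : int := match l with LS => 3 | LB => 2 end.
Definition ev (w : seq letter) : m4 := foldl (fun m l => mul m (mat l)) I4 w.
Definition vstep (p : m4 * int) (l : letter) : m4 * int :=
  (mul p.1 (mat l), p.2 + kap l - 12 * cc p.1 (mat l)).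
Definition val (w : seq letter) : int := (foldl vstep (I4, 0) w).2.

Lemma foldl_fst w m v : (foldl vstep (m, v) w).1 = foldl (fun m l => mul m (mat l)) m w.
Proof. by elim: w m v => //= l w IH m v; rewrite IH. Qed.

Lemma ev_rcons w X : ev (rcons w X) = mul (ev w) (mat X).
Proof. by rewrite /ev foldl_rcons. Qed.
Lemma val_rcons w X : val (rcons w X) = val w + kap X - 12 * cc (ev w) (mat X).
Proof.
by rewrite /val foldl_rcons /vstep /= foldl_fst.
Qed.
Lemma ev_nil : ev [::] = I4. Proof. by []. Qed.
Lemma val_nil : val [::] = 0. Proof. by []. Qed.

Lemma ev_cat u v : ev (u ++ v) = mul (ev u) (ev v).
Proof.
elim/last_ind: v => [|v X IH]; first by rewrite cats0 ev_nil mulx1.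
by rewrite -rcons_cat !ev_rcons IH mulA.
Qed.

Lemma det_mat X : det4 (mat X) = 1. Proof. by case: X. Qed.
Lemma det_ev w : det4 (ev w) = 1.
Proof.
elim/last_ind: w => [|w X IH]; first by [].
by rewrite ev_rcons detM IH det_mat mulr1.
Qed.

Lemma dl_vv u v : dl u v v = 0.
Proof. by rewrite /dl /arc eqxx /crs mulrC subrr lexx orbT. Qed.

Lemma cc_x1 a : cc a I4 = 0.
Proof. by rewrite /cc mulx1 dl_vv. Qed.

Lemma TEL u v : val (u ++ v) = val u + val v - 12 * cc (ev u) (ev v).
Proof.
elim/last_ind: v => [|v X IH]; first by rewrite cats0 val_nil ev_nil cc_x1; ring.
rewrite -rcons_cat !val_rcons IH !ev_rcons ev_cat.
have := cc_cocycle (det_ev u) (det_ev v) (det_mat X).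
move=> h; lia.
Qed.

Lemma CONG u x y v : ev x = ev y -> val x = val y -> val (u ++ x ++ v) = val (u ++ y ++ v).
Proof. by move=> e1 e2; rewrite !TEL !ev_cat e1 e2. Qed.

Lemma rel1 : ev [:: LB; LB; LB; LB; LB; LB] = ev [::] /\ val [:: LB; LB; LB; LB; LB; LB] = val [::].
Proof. by split; vm_compute. Qed.
Lemma rel2 : ev [:: LS; LS] = ev [:: LB; LB; LB] /\ val [:: LS; LS] = val [:: LB; LB; LB].
Proof. by split; vm_compute. Qed.
Lemma rel3 : ev [:: LB; LB; LB; LS] = ev [:: LS; LB; LB; LB] /\ val [:: LB; LB; LB; LS] = val [:: LS; LB; LB; LB].
Proof. by split; vm_compute. Qed.
Lemma rel4 : ev [:: LS; LS; LS; LB; LB; LB] = ev [:: LS] /\ val [:: LS; LS; LS; LB; LB; LB] = val [:: LS].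
Proof. by split; vm_compute. Qed.
Lemma rel5 : ev [:: LS; LB] = ev [:: LB; LB; LB; LS; LS; LS; LB] /\ val [:: LS; LB] = val [:: LB; LB; LB; LS; LS; LS; LB].
Proof. by split; vm_compute. Qed.


Definition Tm := M4 1 1 0 1.
Definition Lm := M4 1 0 1 1.
Definition Tw := [:: LS; LS; LS; LB].
Definition Lw := [:: LS; LS; LS; LB; LB].
Lemma ev_Tw : ev Tw = Tm. Proof. by vm_compute. Qed.
Lemma ev_Lw : ev Lw = Lm. Proof. by vm_compute. Qed.

Definition isN (m : m4) : bool :=
  (0 <= e00 m) && (0 <= e01 m) && (0 <= e10 m) && (0 <= e11 m).
Definition NN (m : m4) : Prop := isN m /\ det4 m = 1.
Definition sz (m : m4) : nat := absz (e00 m + e01 m + e10 m + e11 m).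

Fixpoint mwf (n : nat) (m : m4) : seq letter :=
  match n with
  | 0%N => [::]
  | n'.+1 =>
    if (e01 m == 0) && (e10 m == 0) then [::]
    else if (e00 m <= e01 m) && (e10 m <= e11 m)
    then mwf n' (M4 (e00 m) (e01 m - e00 m) (e10 m) (e11 m - e10 m)) ++ Tw
    else mwf n' (M4 (e00 m - e01 m) (e01 m) (e10 m - e11 m) (e11 m)) ++ Lw
  end.
Definition mw (m : m4) := mwf (sz m) m.

Lemma mwf_spec n : forall m, NN m -> (sz m <= n)%N ->
  ev (mwf n m) = m /\ forall n', (sz m <= n')%N -> mwf n' m = mwf n m.
Proof.
elim: n => [|n IH] [p q r s]; rewrite /NN /isN /sz /det4 /=.
  by move=> [/andP[/andP[/andP[h1 h2] h3] h4] hd] hs; exfalso; nia.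
move=> [/andP[/andP[/andP[h1 h2] h3] h4] hd] hs.
case: ifP => hI.
  case/andP: hI => /eqP hq /eqP hr; subst q r.
  rewrite mul0r subr0 in hd.
  have hs1 : 0 < s by nia.
  have hp1 : 0 < p by nia.
  have hp : p = 1 by nia.
  have hs' : s = 1 by subst p; lia.
  subst p s; split => // -[|n'] // _ /=.
case: ifP => hT.
  have /andP[hT1 hT2] := hT.
  have hN : NN (M4 p (q - p) r (s - r)).
    rewrite /NN /isN /det4 /=; split; last by lia.
    by apply/andP; split; [apply/andP; split; [apply/andP; split|]|]; lia.
  have hsz : (sz (M4 p (q - p) r (s - r)) <= n)%N.
    rewrite /sz /=; case/nandP: hI => /eqP hI; nia.
  have [IH1 IH2] := IH _ hN hsz.
  split.
    by rewrite ev_cat IH1 ev_Tw /mul /Tm /=; m4eq.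
  move=> [|n'] hn'; first by exfalso; lia.
  rewrite /= hI hT (IH2 n') //; rewrite /sz /=; case/nandP: hI => /eqP hI; nia.
have hL : (q <= p) && (s <= r).
  case/nandP: hI => /eqP hI; apply/andP; split; move: hT; case/boolP: (p <= q) => //= ? ?; nia.
case/andP: hL => hL1 hL2.
have hN : NN (M4 (p - q) q (r - s) s).
  rewrite /NN /isN /det4 /=; split; last by lia.
  by apply/andP; split; [apply/andP; split; [apply/andP; split|]|]; lia.
have hsz : (sz (M4 (p - q) q (r - s) s) <= n)%N.
  rewrite /sz /=; case/nandP: hI => /eqP hI; nia.
have [IH1 IH2] := IH _ hN hsz.
split.
  by rewrite ev_cat IH1 ev_Lw /mul /Lm /=; m4eq.
move=> [|n'] hn'; first by exfalso; lia.
rewrite /= hI hT (IH2 n') //; rewrite /sz /=; case/nandP: hI => /eqP hI; nia.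
Qed.

Lemma NN_sz m : NN m -> (sz m <= sz m)%N. Proof. by []. Qed.

Lemma mw_ev m : NN m -> ev (mw m) = m.
Proof. by move=> h; case: (mwf_spec h (leqnn _)). Qed.

Lemma mwf_mw n m : NN m -> (sz m <= n)%N -> mwf n m = mw m.
Proof. by move=> h hn; case: (mwf_spec h (leqnn _)) => _ ->. Qed.

Lemma mw_I : mw I4 = [::]. Proof. by []. Qed.

Lemma NN_T m : NN m -> NN (mul m Tm).
Proof.
case: m => p q r s; rewrite /NN /isN /det4 /mul /Tm /= => -[/andP[/andP[/andP[h1 h2] h3] h4] hd].
split; last by nia.
by apply/andP; split; [apply/andP; split; [apply/andP; split|]|]; lia.
Qed.

Lemma NN_L m : NN m -> NN (mul m Lm).
Proof.
case: m => p q r s; rewrite /NN /isN /det4 /mul /Lm /= => -[/andP[/andP[/andP[h1 h2] h3] h4] hd].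
split; last by nia.
by apply/andP; split; [apply/andP; split; [apply/andP; split|]|]; lia.
Qed.

Lemma mw_T m : NN m -> mw (mul m Tm) = mw m ++ Tw.
Proof.
move=> hm; have hmT := NN_T hm; move: hm hmT.
case: m => p q r s hm; have := hm; rewrite /NN /isN /det4 /= => -[/andP[/andP[/andP[h1 h2] h3] h4] hd] hmT.
rewrite /mw.
have -> : sz (mul (M4 p q r s) Tm) = (sz (M4 p q r s) + absz (p + r)%R)%N by rewrite /sz /mul /Tm /=; lia.
have hpr : (0 < absz (p + r)%R)%N by nia.
case: (absz (p + r)%R) hpr => // k _.
rewrite addnS /= /mul /Tm /=.
have -> : (p * 1 + q * 1 == 0) && (r * 1 + s * 0 == 0) = false.
  by apply/negbTE/negP => /andP[/eqP a /eqP b]; nia.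
rewrite ifT; last by apply/andP; split; lia.
have eX : M4 (p * 1 + q * 0) (p * 1 + q * 1 - (p * 1 + q * 0)) (r * 1 + s * 0) (r * 1 + s * 1 - (r * 1 + s * 0)) = M4 p q r s by m4eq.
by rewrite eX (mwf_mw hm) ?leq_addr.
Qed.

Lemma mw_L m : NN m -> mw (mul m Lm) = mw m ++ Lw.
Proof.
move=> hm; have hmT := NN_L hm; move: hm hmT.
case: m => p q r s hm; have := hm; rewrite /NN /isN /det4 /= => -[/andP[/andP[/andP[h1 h2] h3] h4] hd] hmT.
rewrite /mw.
have -> : sz (mul (M4 p q r s) Lm) = (sz (M4 p q r s) + absz (q + s)%R)%N by rewrite /sz /mul /Lm /=; lia.
have hpr : (0 < absz (q + s)%R)%N by nia.
case: (absz (q + s)%R) hpr => // k _.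
rewrite addnS /= /mul /Lm /=.
have -> : (p * 0 + q * 1 == 0) && (r * 1 + s * 1 == 0) = false.
  by apply/negbTE/negP => /andP[/eqP a /eqP b]; nia.
rewrite ifF; last by apply/negbTE/negP => /andP[a b]; nia.
have eX : M4 (p * 1 + q * 1 - (p * 0 + q * 1)) (p * 0 + q * 1) (r * 1 + s * 1 - (r * 0 + s * 1)) (r * 0 + s * 1) = M4 p q r s by m4eq.
by rewrite eX (mwf_mw hm) ?leq_addr.
Qed.

Lemma DEC m : NN m -> m = I4 \/ (exists m0, NN m0 /\ m = mul m0 Tm) \/ (exists m0, NN m0 /\ m = mul m0 Lm).
Proof.
case: m => p q r s; rewrite /NN /isN /det4 /= => -[/andP[/andP[/andP[h1 h2] h3] h4] hd].
case: (boolP ((q == 0) && (r == 0))) => [/andP[/eqP hq /eqP hr]|hI].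
  subst q r; rewrite mul0r subr0 in hd.
  have hs1 : 0 < s by nia.
  have hp1 : 0 < p by nia.
  have hp : p = 1 by nia.
  subst p; have -> : s = 1 by lia.
  by left.
right.
case: (boolP ((p <= q) && (r <= s))) => [/andP[a b]|hT].
  left; exists (M4 p (q - p) r (s - r)); split.
    split; last by rewrite /det4 /=; lia.
    by rewrite /isN /=; apply/andP; split; [apply/andP; split; [apply/andP; split|]|]; lia.
  by rewrite /mul /Tm /=; m4eq.
have [a b] : q <= p /\ s <= r.
  case/nandP: hI => /eqP hI; move: hT; case/boolP: (p <= q) => //= ? ?; split; nia.
right; exists (M4 (p - q) q (r - s) s); split.
  split; last by rewrite /det4 /=; lia.
  by rewrite /isN /=; apply/andP; split; [apply/andP; split; [apply/andP; split|]|]; lia.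
by rewrite /mul /Lm /=; m4eq.
Qed.



Definition Bw n := nseq n LB.
Definition Sw n := nseq n LS.
Definition shape i m j := mul (mul (ev (Bw i)) m) (ev (Sw j)).
Definition redm g i j := mul (mul (ev (Bw ((6 - i) %% 6))) g) (ev (Sw (3 * j))).
Definition pairs : seq (nat * nat) := [:: (0,0);(0,1);(1,0);(1,1);(2,0);(2,1);(3,0);(3,1);(4,0);(4,1);(5,0);(5,1)]%N.
Definition tst g (p : nat * nat) := isN (redm g p.1 p.2).
Definition fij g := nth (0,0)%N pairs (find (tst g) pairs).
Definition nfw g := Bw (fij g).1 ++ mw (redm g (fij g).1 (fij g).2) ++ Sw (fij g).2.

Definition Bmat (k : nat) : m4 :=
  match k with
  | 0 => I4 | 1 => M4 0 (-1) 1 1 | 2 => M4 (-1) (-1) 1 0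
  | 3 => M4 (-1) 0 0 (-1) | 4 => M4 0 1 (-1) (-1) | 5 => M4 1 1 (-1) 0
  | _ => I4 end%N.
Definition Smat (k : nat) : m4 :=
  match k with
  | 0 => I4 | 1 => M4 0 (-1) 1 0 | 2 => M4 (-1) 0 0 (-1) | 3 => M4 0 1 (-1) 0
  | _ => I4 end%N.

Lemma ev_cons x w : ev (x :: w) = mul (mat x) (ev w).
Proof. by rewrite -cat1s ev_cat /ev /= mul1x. Qed.

Lemma ev_Bw k : ev (Bw k) = Bmat (k %% 6).
Proof.
elim/ltn_ind: k => k IH.
case: (ltnP k 6) => hk.
  rewrite modn_small //.
  by case: k hk {IH} => [|[|[|[|[|[|k]]]]]] hk //; vm_compute.
have e : Bw k = Bw 6 ++ Bw (k - 6) by rewrite /Bw -nseqD subnKC.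
rewrite e ev_cat (IH (k - 6)%N); last by lia.
have -> : ev (Bw 6) = I4 by vm_compute.
rewrite mul1x; congr Bmat.
by rewrite -{2}(subnK hk) modnDr.
Qed.

Lemma ev_Sw k : ev (Sw k) = Smat (k %% 4).
Proof.
elim/ltn_ind: k => k IH.
case: (ltnP k 4) => hk.
  rewrite modn_small //.
  by case: k hk {IH} => [|[|[|[|k]]]] hk //; vm_compute.
have e : Sw k = Sw 4 ++ Sw (k - 4) by rewrite /Sw -nseqD subnKC.
rewrite e ev_cat (IH (k - 4)%N); last by lia.
have -> : ev (Sw 4) = I4 by vm_compute.
rewrite mul1x; congr Smat.
by rewrite -{2}(subnK hk) modnDr.
Qed.

Lemma core_uniq k l m : (k < 6)%N -> (l < 4)%N -> NN m ->
  isN (mul (mul (Bmat k) m) (Smat l)) = (((k == 0) && (l == 0)) || ((k == 3) && (l == 2)))%N.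
Proof.
case: m => p q r s; rewrite /NN /isN /det4 /= => hk hl [/andP[/andP[/andP[h1 h2] h3] h4] hd].
case: k hk => [|[|[|[|[|[|k]]]]]] hk //;
case: l hl => [|[|[|[|l]]]] hl //;
rewrite /mul /=;
first [ by apply/negbTE/negP => /andP[/andP[/andP[? ?] ?] ?]; nia
      | by apply/andP; split; [apply/andP; split; [apply/andP; split|]|]; nia ].
Qed.

Lemma Bw_cat a b : ev (Bw a ++ Bw b) = Bmat ((a + b) %% 6).
Proof. by rewrite /Bw -nseqD ev_Bw. Qed.
Lemma Sw_cat a b : ev (Sw a ++ Sw b) = Smat ((a + b) %% 4).
Proof. by rewrite /Sw -nseqD ev_Sw. Qed.

Lemma redm_shape i m j i' j' :
  redm (shape i m j) i' j' = mul (mul (Bmat ((6 - i' + i) %% 6)) m) (Smat ((j + 3 * j') %% 4)).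
Proof.
rewrite /redm /shape.
by rewrite mulA mulA -mulA -!ev_cat Bw_cat Sw_cat modnDml.
Qed.

Lemma UNIQ i j m i' j' : (i < 6)%N -> (j < 2)%N -> (i' < 6)%N -> (j' < 2)%N -> NN m ->
  isN (redm (shape i m j) i' j') = ((i',j') == (i,j)).
Proof.
move=> hi hj hi' hj' hm; rewrite redm_shape core_uniq //; last by rewrite ltn_mod.
  move: hi hj hi' hj'.
  by case: i => [|[|[|[|[|[|i]]]]]] //; case: j => [|[|j]] //;
    case: i' => [|[|[|[|[|[|i']]]]]] //; case: j' => [|[|j']].
by rewrite ltn_mod.
Qed.

Lemma pairs_bound p : p \in pairs -> (p.1 < 6)%N /\ (p.2 < 2)%N.
Proof.
have : all (fun p : nat * nat => (p.1 < 6) && (p.2 < 2))%N pairs by [].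
by move/allP/(_ p) => h /h /andP.
Qed.

Lemma in_pairs i j : (i < 6)%N -> (j < 2)%N -> (i, j) \in pairs.
Proof. by case: i => [|[|[|[|[|[|i]]]]]] //; case: j => [|[|j]]. Qed.

Lemma redm_id i m j : (i < 6)%N -> (j < 2)%N -> redm (shape i m j) i j = m.
Proof.
move=> hi hj; rewrite redm_shape.
have -> : ((6 - i + i) %% 6 = 0)%N by rewrite subnK ?modnn // ltnW.
have -> : ((j + 3 * j) %% 4 = 0)%N by case: j hj => [|[|j]].
by rewrite /Bmat /Smat mul1x mulx1.
Qed.

Lemma NF i m j : (i < 6)%N -> (j < 2)%N -> NN m -> nfw (shape i m j) = Bw i ++ mw m ++ Sw j.
Proof.
move=> hi hj hm.
have hf : fij (shape i m j) = (i, j).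
  rewrite /fij (@eq_in_find _ _ (pred1 (i, j))).
    by rewrite -/(index (i, j) pairs) nth_index // in_pairs.
  move=> [a b] /pairs_bound [ha hb]; rewrite /tst /= UNIQ //.
by rewrite /nfw hf /= redm_id.
Qed.

Lemma shapeE i m j : (i < 6)%N -> (j < 4)%N -> shape i m j = mul (mul (Bmat i) m) (Smat j).
Proof. by move=> hi hj; rewrite /shape ev_Bw ev_Sw !modn_small. Qed.

Ltac bcases i := case: i => [|[|[|[|[|[|i]]]]]] //.

Lemma E1 i m : (i < 6)%N -> mul (shape i m 0) Sm = shape i m 1.
Proof. by move=> hi; rewrite /shape -mulA. Qed.

Lemma E2 i m : (i < 6)%N -> mul (shape i m 1) Sm = shape ((i + 3) %% 6) m 0.
Proof.
move=> hi; rewrite !shapeE ?ltn_mod //.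
case: m => p q r s; move: hi; bcases i => _; rewrite /= /mul /=; m4eq.
Qed.

Lemma E3 i : (i < 6)%N -> mul (shape i I4 0) Bm = shape ((i + 1) %% 6) I4 0.
Proof. by move=> hi; rewrite !shapeE ?ltn_mod //; move: hi; bcases i => _; vm_compute. Qed.

Lemma E4 i m : (i < 6)%N -> mul (shape i (mul m Tm) 0) Bm = shape i (mul m Lm) 0.
Proof.
move=> hi; rewrite !shapeE ?ltn_mod //.
case: m => p q r s; move: hi; bcases i => _; rewrite /= /mul /=; m4eq.
Qed.

Lemma E5 i m : (i < 6)%N -> mul (shape i (mul m Lm) 0) Bm = shape i m 1.
Proof.
move=> hi; rewrite !shapeE ?ltn_mod //.
case: m => p q r s; move: hi; bcases i => _; rewrite /= /mul /=; m4eq.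
Qed.

Lemma E6 i m : (i < 6)%N -> mul (shape i m 1) Bm = shape ((i + 3) %% 6) (mul m Tm) 0.
Proof.
move=> hi; rewrite !shapeE ?ltn_mod //.
case: m => p q r s; move: hi; bcases i => _; rewrite /= /mul /=; m4eq.
Qed.

Lemma NN_I : NN I4. Proof. by []. Qed.

Lemma EX w : exists i j m, [/\ (i < 6)%N, (j < 2)%N, NN m & ev w = shape i m j].
Proof.
elim/last_ind: w => [|w X [i [j [m [hi hj hm e]]]]].
  by exists 0%N, 0%N, I4; split => //; vm_compute.
rewrite ev_rcons e; clear e.
case: X; case: j hj => [|[|j]] hj //.
- by exists i, 1%N, m; split => //; rewrite E1.
- by exists ((i + 3) %% 6)%N, 0%N, m; split => //; rewrite ?ltn_mod ?E2.
- case: (DEC hm) => [->|[[m0 [hm0 ->]]|[m0 [hm0 ->]]]].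
  + by exists ((i + 1) %% 6)%N, 0%N, I4; split; rewrite ?ltn_mod ?E3 //; exact: NN_I.
  + by exists i, 0%N, (mul m0 Lm); split; [done|done|exact: NN_L|rewrite E4].
  + by exists i, 1%N, m0; split => //; rewrite ?E5.
- by exists ((i + 3) %% 6)%N, 0%N, (mul m Tm); split; [rewrite ltn_mod|done|exact: NN_T|rewrite E6].
Qed.


Lemma ev_B3 : ev (Bw 3) = M4 (-1) 0 0 (-1). Proof. by vm_compute. Qed.

Lemma comm3 w : ev (w ++ Bw 3) = ev (Bw 3 ++ w) /\ val (w ++ Bw 3) = val (Bw 3 ++ w).
Proof.
have evc : forall w, ev (w ++ Bw 3) = ev (Bw 3 ++ w).
  by move=> w'; rewrite !ev_cat ev_B3; case: (ev w') => a b c d; rewrite /mul /=; m4eq.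
split; first exact: evc.
elim/last_ind: w => [|w X IH]; first by rewrite cats0.
have -> : rcons w X ++ Bw 3 = w ++ ([:: X] ++ Bw 3) ++ [::] by rewrite cats0 -cats1 -catA.
rewrite (@CONG _ _ (Bw 3 ++ [:: X])); last first.
- by case: X; [case: rel3 | ].
- by case: X; [case: rel3 | ].
have -> : w ++ (Bw 3 ++ [:: X]) ++ [::] = [::] ++ (w ++ Bw 3) ++ [:: X] by rewrite cats0 cat0s catA.
rewrite (@CONG _ _ (Bw 3 ++ w)) ?evc //.
by rewrite cat0s -catA cats1.
Qed.

Lemma B3shift i u : (i < 6)%N -> val (Bw i ++ Bw 3 ++ u) = val (Bw ((i + 3) %% 6) ++ u).
Proof.
move=> hi; case: (ltnP i 3) => h3.
  by rewrite catA /Bw -nseqD modn_small //; lia.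
have -> : Bw i = Bw (i - 3) ++ Bw 3 by rewrite /Bw -nseqD subnK.
have -> : ((i + 3) %% 6 = i - 3)%N.
  by move: hi h3; case: i => [|[|[|[|[|[|i]]]]]].
have -> : (Bw (i - 3) ++ Bw 3) ++ Bw 3 ++ u = Bw (i-3) ++ (Bw 3 ++ Bw 3) ++ u by rewrite !catA.
by rewrite (@CONG _ _ [::]) //; case: rel1.
Qed.

Lemma STEP i j m X : (i < 6)%N -> (j < 2)%N -> NN m ->
  val (Bw i ++ mw m ++ Sw j ++ [:: X]) = val (nfw (mul (shape i m j) (mat X))).
Proof.
move=> hi hj hm.
case: X; case: j hj => [|[|j]] hj //.
- by rewrite [mat LS]/= E1 // NF.
- rewrite [mat LS]/= E2 // NF ?ltn_mod //.
  have -> : Bw i ++ mw m ++ Sw 1 ++ [:: LS] = (Bw i ++ mw m) ++ [:: LS; LS] ++ [::] by rewrite cats0 -catA.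
  rewrite (@CONG _ _ (Bw 3)); try by case: rel2.
  have -> : (Bw i ++ mw m) ++ Bw 3 ++ [::] = Bw i ++ (mw m ++ Bw 3) ++ [::] by rewrite !cats0 -catA.
  rewrite (@CONG _ _ (Bw 3 ++ mw m)); try by case: (comm3 (mw m)).
  by rewrite B3shift // /Sw /= cats0.
- case: (DEC hm) => [->|[[m0 [hm0 ->]]|[m0 [hm0 ->]]]].
  + rewrite [mat LB]/= E3 // NF ?ltn_mod // mw_I.
    case: (ltnP i 5) => h5.
      rewrite modn_small; last by lia.
      by rewrite /Sw /= cats0 /Bw nseqD.
    have -> : i = 5%N by lia.
    by case: rel1.
  + rewrite [mat LB]/= E4 // NF //; last exact: NN_L.
    by rewrite mw_L // mw_T // -!catA.
  + rewrite [mat LB]/= E5 // NF // mw_L //.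
    have -> : Bw i ++ (mw m0 ++ Lw) ++ Sw 0 ++ [:: LB] = (Bw i ++ mw m0) ++ [:: LS; LS; LS; LB; LB; LB] ++ [::] by rewrite cats0 -!catA.
    rewrite (@CONG _ _ [:: LS]); try by case: rel4.
    by rewrite cats0 -catA.
- rewrite [mat LB]/= E6 // NF ?ltn_mod //; last exact: NN_T.
  rewrite mw_T //.
  have -> : Bw i ++ mw m ++ Sw 1 ++ [:: LB] = (Bw i ++ mw m) ++ [:: LS; LB] ++ [::] by rewrite cats0 -catA.
  rewrite (@CONG _ _ (Bw 3 ++ Tw)); try by case: rel5.
  have -> : (Bw i ++ mw m) ++ (Bw 3 ++ Tw) ++ [::] = Bw i ++ (mw m ++ Bw 3) ++ Tw by rewrite cats0 -!catA.
  rewrite (@CONG _ _ (Bw 3 ++ mw m)); try by case: (comm3 (mw m)).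
  by rewrite -catA B3shift // /Sw /= cats0.
Qed.

Lemma nfw_word w : exists i j m, [/\ (i < 6)%N, (j < 2)%N, NN m, ev w = shape i m j &
  nfw (ev w) = Bw i ++ mw m ++ Sw j].
Proof.
case: (EX w) => i [j [m [hi hj hm e]]].
by exists i, j, m; split => //; rewrite e NF.
Qed.

Lemma nfw_ev w : ev (nfw (ev w)) = ev w.
Proof.
case: (nfw_word w) => i [j [m [hi hj hm e ->]]].
by rewrite e !ev_cat mw_ev // /shape mulA.
Qed.

Lemma ALL w : val w = val (nfw (ev w)).
Proof.
elim/last_ind: w => [|w X IH].
  have -> : ev [::] = shape 0 I4 0 by vm_compute.
  rewrite NF //; exact: NN_I.
have -> : rcons w X = [::] ++ w ++ [:: X] by rewrite cats1.
rewrite (@CONG _ _ (nfw (ev w))); last first.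
- exact: IH.
- by rewrite nfw_ev.
case: (nfw_word w) => i [j [m [hi hj hm e ->]]].
rewrite -catA -catA STEP //.
by rewrite cat0s cats1 ev_rcons e.
Qed.

Definition FF (g : m4) : int := val (nfw g).

Lemma MAINw a b : FF (mul (ev a) (ev b)) = FF (ev a) + FF (ev b) - 12 * cc (ev a) (ev b).
Proof. by rewrite /FF -ev_cat -(ALL (a ++ b)) -(ALL a) -(ALL b) TEL. Qed.



Definition Tiw := [:: LB; LB; LB; LB; LB; LS].
Lemma ev_Tiw : ev Tiw = M4 1 (-1) 0 1. Proof. by vm_compute. Qed.

Lemma Tpow_nat (n : nat) : (exists w, ev w = M4 1 n 0 1) /\ (exists w, ev w = M4 1 (- n%:Z) 0 1).
Proof.
elim: n => [|n [[w1 e1] [w2 e2]]]; first by split; exists [::].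
split.
  by exists (w1 ++ Tw); rewrite ev_cat e1 ev_Tw /mul /Tm /=; congr M4; lia.
by exists (w2 ++ Tiw); rewrite ev_cat e2 ev_Tiw /mul /=; congr M4; lia.
Qed.

Lemma Tpow (k : int) : exists w, ev w = M4 1 k 0 1.
Proof.
case: k => n; first by case: (Tpow_nat n).
by case: (Tpow_nat n.+1) => _ [w e]; exists w; rewrite e; congr M4.
Qed.

Lemma GEN_aux n : forall g, det4 g = 1 -> (absz (e00 g) + 2 * absz (e10 g) < n)%N -> exists w, ev w = g.
Proof.
elim: n => [|n IH] [p q r s]; rewrite /det4 /= => hd hn; first by [].
case: (ltrgtP r 0) => hr.
- case: (leqP (absz r) (absz p)) => hrp.
  + case: (ltrgtP p 0) => hp.
    * have [w e] := IH (M4 (p - r) (q - s) r s) ltac:(rewrite /det4 /=; lia) ltac:(rewrite /=; lia).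
      by exists (Tw ++ w); rewrite ev_cat ev_Tw e /mul /Tm /=; m4eq.
    * have [w e] := IH (M4 (p + r) (q + s) r s) ltac:(rewrite /det4 /=; lia) ltac:(rewrite /=; lia).
      by exists (Tiw ++ w); rewrite ev_cat ev_Tiw e /mul /=; m4eq.
    * by exfalso; lia.
  + have [w e] := IH (M4 r s (- p) (- q)) ltac:(rewrite /det4 /=; lia) ltac:(rewrite /=; lia).
    by exists ([:: LS] ++ w); rewrite ev_cat e /ev /= /mul /=; m4eq.
- case: (leqP (absz r) (absz p)) => hrp.
  + case: (ltrgtP p 0) => hp.
    * have [w e] := IH (M4 (p + r) (q + s) r s) ltac:(rewrite /det4 /=; lia) ltac:(rewrite /=; lia).
      by exists (Tiw ++ w); rewrite ev_cat ev_Tiw e /mul /=; m4eq.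
    * have [w e] := IH (M4 (p - r) (q - s) r s) ltac:(rewrite /det4 /=; lia) ltac:(rewrite /=; lia).
      by exists (Tw ++ w); rewrite ev_cat ev_Tw e /mul /Tm /=; m4eq.
    * by exfalso; lia.
  + have [w e] := IH (M4 r s (- p) (- q)) ltac:(rewrite /det4 /=; lia) ltac:(rewrite /=; lia).
    by exists ([:: LS] ++ w); rewrite ev_cat e /ev /= /mul /=; m4eq.
- subst r; rewrite mulr0 subr0 in hd.
  have [[-> ->]|[-> ->]] : (p = 1 /\ s = 1) \/ (p = -1 /\ s = -1).
    case: (ltrgtP p 0) => hp; case: (ltrgtP s 0) => hs;
    first [ by exfalso; nia | by right; split; nia | by left; split; nia ].
    by case: (Tpow q) => w e; exists w.
  case: (Tpow (- q)) => w e; exists (Bw 3 ++ w).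
  by rewrite ev_cat e ev_B3 /mul /=; m4eq.
Qed.

Lemma GEN g : det4 g = 1 -> exists w, ev w = g.
Proof. by move=> h; apply: (GEN_aux h (ltnSn _)). Qed.

Lemma MAIN a b : det4 a = 1 -> det4 b = 1 -> FF (mul a b) = FF a + FF b - 12 * cc a b.
Proof.
move=> ha hb; case: (GEN ha) => wa <-; case: (GEN hb) => wb <-.
exact: MAINw.
Qed.


Definition ofM (g : 'M[int]_2) : m4 := M4 (g 0 0) (g 0 1) (g 1 0) (g 1 1).
Definition toM (x : m4) : 'M[int]_2 :=
  \matrix_(i < 2, j < 2)
    (if i == 0 then (if j == 0 then e00 x else e01 x) else (if j == 0 then e10 x else e11 x)).

Lemma ord2E (i : 'I_2) : i = 0 \/ i = 1.
Proof. by case: i => [[|[|i]] hi] //; [left|right]; apply: val_inj. Qed.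

Lemma ofMK x : ofM (toM x) = x.
Proof. by case: x => a b c d; rewrite /ofM !mxE. Qed.

Lemma toMK g : toM (ofM g) = g.
Proof.
apply/matrixP => i j; rewrite mxE /ofM /=.
by case: (ord2E i) => ->; case: (ord2E j) => ->.
Qed.

Lemma ofM_inj g h : ofM g = ofM h -> g = h.
Proof. by move=> e; rewrite -(toMK g) e toMK. Qed.

Lemma ofM_mul g h : ofM (g *m h) = mul (ofM g) (ofM h).
Proof.
have l1 : lift ord0 (ord0 : 'I_1) = 1 :> 'I_2 by apply: val_inj.
have l0' : (ord0 : 'I_2) = 0 by apply: val_inj.
by rewrite /ofM /mul !mxE !big_ord_recl !big_ord0 !addr0 l1 l0'.
Qed.

Lemma toM_mul x y : toM (mul x y) = toM x *m toM y.
Proof. by apply: ofM_inj; rewrite ofM_mul !ofMK. Qed.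

Lemma det2 (A : 'M[int]_2) : \det A = A 0 0 * A 1 1 - A 0 1 * A 1 0.
Proof.
rewrite (expand_det_row _ 0) big_ord_recl big_ord1 /cofactor !det_mx11 !mxE /=.
have -> : lift 0 (0 : 'I_1) = 1 :> 'I_2 by apply/val_inj.
have -> : lift (1 : 'I_2) (0 : 'I_1) = 0 :> 'I_2 by apply/val_inj.
have -> : (ord0 : 'I_2) = 0 by apply/val_inj.
by rewrite /= expr0 expr1 mul1r mulN1r mulrN.
Qed.

Lemma det_ofM g : \det g = det4 (ofM g).
Proof. by rewrite det2. Qed.

Lemma det_toM x : \det (toM x) = det4 x.
Proof. by rewrite det_ofM ofMK. Qed.

Lemma ofM1 : ofM 1%:M = I4.
Proof. by rewrite /ofM !mxE. Qed.

Lemma invmxE g : \det g = 1 -> invmx g = toM (adj (ofM g)).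
Proof.
move=> hd.
have hu : g \in unitmx by rewrite unitmxE hd unitr1.
have e : g *m toM (adj (ofM g)) = 1%:M.
  by apply: ofM_inj; rewrite ofM_mul ofMK ofM1 mul_adj' // -det_ofM.
by rewrite -[invmx g]mulmx1 -e mulmxA mulVmx // mul1mx.
Qed.

Lemma act_ray g : \det g = 1 -> ((act g l0) 0 0, (act g l0) 0 1) = ray (ofM g).
Proof.
move=> hd; rewrite /act invmxE // /ray /vm /adj /L0 /l0 /ofM /=.
have l1 : lift ord0 (ord0 : 'I_1) = 1 :> 'I_2 by apply: val_inj.
have l0' : (ord0 : 'I_2) = 0 by apply: val_inj.
rewrite !mxE !big_ord_recl !big_ord0 !addr0 l1 l0' !mxE /=.
congr (_,_); ring.
Qed.

Lemma delta_dl u v w : delta u v w = dl (u 0 0, u 0 1) (v 0 0, v 0 1) (w 0 0, w 0 1).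
Proof. by []. Qed.

Definition phi0 (g1 g2 : 'M[int]_2) : rat := (FF (mul (adj (ofM g1)) (ofM g2)))%:~R / 12%:R.

Lemma detSL g : SL2Z g -> det4 (ofM g) = 1.
Proof. by rewrite /SL2Z det_ofM. Qed.

Lemma vmL0I : vm L0 I4 = L0.
Proof. by rewrite /vm /L0 /=; congr (_,_); ring. Qed.

Lemma phi0_spec : phi_spec phi0.
Proof.
split; [|split].
- by move=> g1 g2 _ _; exists (FF (mul (adj (ofM g1)) (ofM g2))).
- move=> h g1 g2 /detSL hh _ _; rewrite /phi0 !ofM_mul adjM.
  by rewrite -mulA [mul (adj (ofM h)) _]mulA (mul_adj hh) mul1x.
- move=> g1 g2 g3 /[dup] h1 /detSL d1 /[dup] h2 /detSL d2 /[dup] h3 /detSL d3.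
  rewrite /phi0.
  set G1 := ofM g1; set G2 := ofM g2; set G3 := ofM g3.
  have da : det4 (mul (adj G1) G2) = 1 by rewrite detM det_adj d1 d2 mulr1.
  have db : det4 (mul (adj G2) G3) = 1 by rewrite detM det_adj d2 d3 mulr1.
  have eab : mul (mul (adj G1) G2) (mul (adj G2) G3) = mul (adj G1) G3.
    by rewrite -mulA [mul G2 _]mulA (mul_adj' d2) mul1x.
  rewrite -eab (MAIN da db).
  have -> : cc (mul (adj G1) G2) (mul (adj G2) G3) = delta (act g1 l0) (act g2 l0) (act g3 l0).
    rewrite delta_dl (act_ray h1) (act_ray h2) (act_ray h3) /cc eab -/G1 -/G2 -/G3.
    rewrite -(@dl_vm (ray G1) (ray G2) (ray G3) G1); last by rewrite d1.
    congr dl.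
    - by rewrite /ray vm_mul (mul_adj d1) vmL0I.
    - by rewrite /ray vm_mul adjM adjK.
    - by rewrite /ray vm_mul adjM adjK.
  move: (FF (mul (adj G1) G2)) (FF (mul (adj G2) G3)) (delta (act g1 l0) (act g2 l0) (act g3 l0)) => x y z.
  rewrite !(intrD, intrB, intrN, intrM).
  by field.
Qed.

Lemma uniq_aux (D : 'M[int]_2 -> 'M[int]_2 -> rat) :
  (forall h g1 g2, SL2Z h -> SL2Z g1 -> SL2Z g2 -> D (h *m g1) (h *m g2) = D g1 g2) ->
  (forall g1 g2 g3, SL2Z g1 -> SL2Z g2 -> SL2Z g3 -> D g1 g2 + D g2 g3 - D g1 g3 = 0) ->
  forall g1 g2, SL2Z g1 -> SL2Z g2 -> D g1 g2 = 0.
Proof.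
move=> Hinv Hco.
pose D' x y := D (toM x) (toM y).
have SLt : forall x, det4 x = 1 -> SL2Z (toM x) by move=> x hx; rewrite /SL2Z det_toM.
have inv' : forall h x y, det4 h = 1 -> det4 x = 1 -> det4 y = 1 -> D' (mul h x) (mul h y) = D' x y.
  by move=> h x y hh hx hy; rewrite /D' !toM_mul; apply: Hinv; exact: SLt.
have co' : forall x y z, det4 x = 1 -> det4 y = 1 -> det4 z = 1 -> D' x y + D' y z - D' x z = 0.
  by move=> x y z hx hy hz; rewrite /D'; apply: Hco; exact: SLt.
pose f x := D' I4 x.
have dI : det4 I4 = 1 by [].
have fI : f I4 = 0.
  by have := co' I4 I4 I4 dI dI dI; rewrite addrK.
have fM : forall x y, det4 x = 1 -> det4 y = 1 -> f (mul x y) = f x + f y.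
  move=> x y hx hy.
  have hxy : det4 (mul x y) = 1 by rewrite detM hx hy mulr1.
  have h1 := co' I4 x (mul x y) dI hx hxy.
  have h2 := inv' x I4 y hx dI hy.
  rewrite mulx1 in h2; rewrite h2 in h1.
  by rewrite /f; move/eqP: h1; rewrite subr_eq0 => /eqP <-.
have dS : det4 Sm = 1 by [].
have dB : det4 Bm = 1 by [].
have fS : f Sm = 0.
  have e : mul Sm (mul Sm (mul Sm Sm)) = I4 by vm_compute.
  have h4 : f I4 = f Sm + (f Sm + (f Sm + f Sm)).
    have s2 : det4 (mul Sm Sm) = 1 by rewrite detM dS mulr1.
    have s3 : det4 (mul Sm (mul Sm Sm)) = 1 by rewrite detM dS s2 mulr1.
    by rewrite -{1}e (fM _ _ dS s3) (fM _ _ dS s2) (fM _ _ dS dS).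
  move: h4; rewrite fI; move: (f Sm) => a h; lra.
have fB : f Bm = 0.
  have e : mul Bm (mul Bm (mul Bm (mul Bm (mul Bm Bm)))) = I4 by vm_compute.
  have b2 : det4 (mul Bm Bm) = 1 by rewrite detM dB mulr1.
  have b3 : det4 (mul Bm (mul Bm Bm)) = 1 by rewrite detM dB b2 mulr1.
  have b4 : det4 (mul Bm (mul Bm (mul Bm Bm))) = 1 by rewrite detM dB b3 mulr1.
  have b5 : det4 (mul Bm (mul Bm (mul Bm (mul Bm Bm)))) = 1 by rewrite detM dB b4 mulr1.
  have h6 : f I4 = f Bm + (f Bm + (f Bm + (f Bm + (f Bm + f Bm)))).
    by rewrite -{1}e (fM _ _ dB b5) (fM _ _ dB b4) (fM _ _ dB b3) (fM _ _ dB b2) (fM _ _ dB dB).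
  move: h6; rewrite fI; move: (f Bm) => a h; lra.
have fw : forall w, f (ev w) = 0.
  elim/last_ind => [|w X IH]; first exact: fI.
  rewrite ev_rcons (fM _ _ (det_ev w) (det_mat X)) IH add0r.
  by case: X; [exact: fS | exact: fB].
have f0 : forall x, det4 x = 1 -> f x = 0.
  by move=> x hx; case: (GEN hx) => w <-; apply: fw.
move=> g1 g2 h1 h2.
have d1 := detSL h1; have d2 := detSL h2.
have : D' (ofM g1) (ofM g2) = 0.
  have da : det4 (adj (ofM g1)) = 1 by rewrite det_adj.
  rewrite -(inv' (adj (ofM g1)) _ _ da d1 d2) (mul_adj d1).
  by apply: f0; rewrite detM det_adj d1 d2 mulr1.
by rewrite /D' !toMK.
Qed.

Theorem mainTheorem15 :
  exists phi : 'M[int]_2 -> 'M[int]_2 -> rat,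
    phi_spec phi /\
    forall psi : 'M[int]_2 -> 'M[int]_2 -> rat, phi_spec psi ->
      forall g1 g2, SL2Z g1 -> SL2Z g2 -> psi g1 g2 = phi g1 g2.
Proof.
exists phi0; split; first exact: phi0_spec.
move=> psi [_ [Ip Cp]] g1 g2 h1 h2.
have [_ [I0 C0]] := phi0_spec.
apply/eqP; rewrite -subr_eq0; apply/eqP.
refine (@uniq_aux (fun a b => psi a b - phi0 a b) _ _ g1 g2 h1 h2).
- move=> h a b hh ha hb /=.
  by rewrite (Ip h a b hh ha hb) (I0 h a b hh ha hb).
- move=> a b c ha hb hc /=.
  move: (Cp a b c ha hb hc) (C0 a b c ha hb hc).
  move: (psi a b) (psi b c) (psi a c) (phi0 a b) (phi0 b c) (phi0 a c) => p1 p2 p3 q1 q2 q3.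
  move: ((delta (act a l0) (act b l0) (act c l0))%:~R : rat) => d e1 e2.
  lra.
Qed.
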